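(* Under the hypotheses and notation of the dual rate result (Assumption 1, Algorithm (DG) started at $\lambda^0\in\mathbb D$, $\bar\kappa$ an error-bound constant valid on $\{\lambda\in\mathbb D:\mathcal T(\lambda)\le\mathcal T(\lambda^0)\}$, $\rho=\frac{4(1+\bar\kappa)}{1+4(1+\bar\kappa)}$), for all $k\ge1$, \[ \big\|[Gz^k-g]_{\mathbb D}\big\|_{W^{-1}}\le \rho^{\frac{k-2}{2}}\,\mathcal R(\lambda^0). \]
   Context: Standing setup. Consider $\min_{z}\ f(z)=\sum_{i=1}^M f_i(z_i)$ subject to $Az=b$, $Cz\le c$, where $z=(z_1,\dots,z_M)$, $z_i\in\mathbb{R}^{n_i}$, $n=\sum_i n_i$, $A\in\mathbb{R}^{p\times n}$, $C\in\mathbb{R}^{q\times n}$, $b\in\mathbb{R}^p$, $c\in\mathbb{R}^q$, and each $f_i:\mathbb{R}^{n_i}\to\mathbb{R}$ is convex. The rows are partitioned into $\bar M$ blocks: $A$ has blocks $A_{ji}\in\mathbb{R}^{p_j\times n_i}$ and $C$ has blocks $C_{ji}\in\mathbb{R}^{q_j\times n_i}$. A matrix $E\in\{0,1\}^{\bar M\times M}$ is given such that $E_{ji}=0$ implies $A_{ji}=0$ and $C_{ji}=0$; $\bar{\mathcal N}_i=\{j: E_{ji}\neq 0\}$, $\mathcal N_j=\{i:E_{ji}\ne 0\}$. Let $G=\begin{bmatrix}A\\ C\end{bmatrix}$, $g=\begin{bmatrix}b\\ c\end{bmatrix}$, $\lambda=(\nu,\mu)$, $\mathbb{D}=\mathbb{R}^p\times\mathbb{R}^q_+$,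 $\mathcal L(z,\lambda)=f(z)+\langle\lambda,Gz-g\rangle$, $d(\lambda)=\min_{z}\mathcal L(z,\lambda)$, $\nabla d(\lambda)=Gz(\lambda)-g$ with $z(\lambda)$ the unique minimizer of $\mathcal L(\cdot,\lambda)$. $L_{d_i}=\big\|\begin{bmatrix}[A_{ji}]_{j\in\bar{\mathcal N}_i}\\ [C_{ji}]_{j\in\bar{\mathcal N}_i}\end{bmatrix}\big\|^2/\sigma_i$; $W=\mathrm{diag}(W_\nu,W_\mu)$, $W_\nu=\mathrm{diag}\big(\sum_{i\in\mathcal N_j}L_{d_i}I_{p_j};\ j\big)$, $W_\mu=\mathrm{diag}\big(\sum_{i\in\mathcal N_j}L_{d_i}I_{q_j};\ j\big)$, assumed positive definite; $\|x\|_W=\sqrt{x^TWx}$, $\|x\|_{W^{-1}}=\sqrt{x^TW^{-1}x}$. Assumption 1: (a) each $f_i$ is $\sigma_i$-strongly convex and has $L_i$-Lipschitz gradient; (b) $A$ has full row rank and there is $\tilde z$ with $A\tilde z=b$, $C\tilde z<c$. Then the set $\Lambda^*$ of maximizers of $d$ over $\mathbb D$ is nonempty and bounded, and $\max_{\mathbb D}d=f^*$. $[x]^W_S$ is the $\|\cdot\|_W$-projection onto $S$; $[x]_{\mathbb D}$ is the Euclidean projection onto $\mathbb D$ (first $p$ coordinates unchanged, positive part of last $q$). $\nabla^+ d(\lambda)=[\lambda+W^{-1}\nabla d(\lambda)]^W_{\mathbb D}-\lambda$. $\mathcal R(\lambda)=\min_{\lambda^*\in\Lambda^*}\|\lambda^*-\lambda\|_W$,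 $\mathcal T(\lambda)=\max_{\lambda^*\in\Lambda^*}\|\lambda-\lambda^*\|_W$. $\bar\kappa$ is a constant with $\|\lambda-[\lambda]^W_{\Lambda^*}\|_W\le\bar\kappa\|\nabla^+d(\lambda)\|_W$ for all $\lambda\in\mathbb D$ with $\mathcal T(\lambda)\le\mathcal T(\lambda^0)$. Algorithm (DG): given $\lambda^0\in\mathbb D$, for $k\ge0$ set $z^k=\arg\min_{z}\mathcal L(z,\lambda^k)$ and $\lambda^{k+1}=[\lambda^k+W^{-1}\nabla d(\lambda^k)]_{\mathbb D}$. *)

(* Defs.v *)
(* Stdlib Reals.  Vectors are functions nat -> R, only the first
   (dimension) coordinates are meaningful; matrices are nat -> nat -> R. *)
From Stdlib Require Import Reals Lra Lia.
Open Scope R_scope.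

Fixpoint fsum (k : nat) (f : nat -> R) : R :=
  match k with O => 0 | S k' => fsum k' f + f k' end.

Definition vadd (x y : nat -> R) : nat -> R := fun r => x r + y r.
Definition vsub (x y : nat -> R) : nat -> R := fun r => x r - y r.
Definition vscal (a : R) (x : nat -> R) : nat -> R := fun r => a * x r.

Definition is_max (S : R -> Prop) (v : R) : Prop := S v /\ forall w, S w -> w <= v.
Definition is_min (S : R -> Prop) (v : R) : Prop := S v /\ forall w, S w -> v <= w.

Section Problem.
(* n = dim z ; p = #equality rows ; q = #inequality rows ;
   M = #variable blocks ; Mbar = #row blocks.
   blk c      : variable block (< M) of coordinate c < n   (z_i = coords with blk = i)
   rA r, rC r : row block (< Mbar) of row r of A, resp. C *)
Variables (n p q M : nat) (blk rA rC : nat -> nat) (E : nat -> nat -> bool)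
          (A C : nat -> nat -> R) (b c : nat -> R) (Ld : nat -> R).

Definition normsq_blk (i : nat) (x : nat -> R) : R :=
  fsum n (fun col => if Nat.eqb (blk col) i then x col ^ 2 else 0).

Definition sameblk (i : nat) (x y : nat -> R) : Prop :=
  forall col, (col < n)%nat -> blk col = i -> x col = y col.

(* G = [A; C], g = [b; c]; row r < p is row r of A, row p + r' is row r' of C *)
Definition Gm (r col : nat) : R := if Nat.ltb r p then A r col else C (r - p)%nat col.
Definition gv (r : nat) : R := if Nat.ltb r p then b r else c (r - p)%nat.
Definition rowblk (r : nat) : nat := if Nat.ltb r p then rA r else rC (r - p)%nat.

Definition Gz (z : nat -> R) : nat -> R := fun r => fsum n (fun col => Gm r col * z col).
(* nabla d at the minimizer z : G z - g *)
Definition resid (z : nat -> R) : nat -> R := fun r => Gz z r - gv r.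

(* the set { ||B_i x||^2 : ||x_i|| <= 1 }, B_i = [[A_ji]_{j in Nbar_i}; [C_ji]_{j in Nbar_i}] *)
Definition opnorm_set (i : nat) (y : R) : Prop :=
  exists x : nat -> R, normsq_blk i x <= 1 /\
    y = fsum (p + q) (fun r => if E (rowblk r) i
          then (fsum n (fun col => if Nat.eqb (blk col) i then Gm r col * x col else 0)) ^ 2
          else 0).

(* diagonal of W : the row r in row block j gets sum_{i in N_j} L_{d_i} *)
Definition Wd (r : nat) : R := fsum M (fun i => if E (rowblk r) i then Ld i else 0).

Definition normW (x : nat -> R) : R := sqrt (fsum (p + q) (fun r => Wd r * x r ^ 2)).
Definition normWinv (x : nat -> R) : R := sqrt (fsum (p + q) (fun r => x r ^ 2 / Wd r)).
Definition Winv (x : nat -> R) : nat -> R := fun r => x r / Wd r.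

Definition inD (l : nat -> R) : Prop := forall r, (p <= r < p + q)%nat -> 0 <= l r.
Definition projD (l : nat -> R) : nat -> R :=
  fun r => if Nat.ltb r p then l r else Rmax 0 (l r).

Definition isWproj (S : (nat -> R) -> Prop) (x y : nat -> R) : Prop :=
  S y /\ forall y', S y' -> normW (vsub x y) <= normW (vsub x y').

Variable f : nat -> (nat -> R) -> R.   (* f i = f_i, acting on the block z_i *)

Definition fsep (z : nat -> R) : R := fsum M (fun i => f i z).
Definition lagr (z l : nat -> R) : R := fsep z + fsum (p + q) (fun r => l r * resid z r).
Definition argminL (l z : nat -> R) : Prop := forall z', lagr z l <= lagr z' l.
Definition dval (l : nat -> R) (v : R) : Prop :=
  (exists z, lagr z l = v) /\ forall z, v <= lagr z l.
Definition inLstar (ls : nat -> R) : Prop :=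
  inD ls /\ exists v, dval ls v /\ forall l w, inD l -> dval l w -> w <= v.
(* set of W-distances from l to Lambda* ; R(l) = min, T(l) = max of this set *)
Definition distLstar (l : nat -> R) (v : R) : Prop :=
  exists ls, inLstar ls /\ v = normW (vsub ls l).

End Problem.

(* Main.v *)
Require Import Defs.
From Stdlib Require Import Reals.
From Stdlib Require Import Lra Lia Psatz FunctionalExtensionality IndefiniteDescription Classical.
From mathcomp Require all_boot all_order all_algebra Rstruct.

Module SurjM.
Import all_boot all_order all_algebra Rstruct.
Import GRing.Theory.
Local Open Scope ring_scope.

Lemma fsum_big (k : nat) (F : nat -> R) : fsum k F = (\sum_(i < k) F i).
Proof.
elim: k => [|k IH] /=; first by rewrite big_ord0.
by rewrite big_ord_recr /= IH.
Qed.

Lemma surjA (p n : nat) (A : nat -> nat -> R) :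
 (forall nu : nat -> R, (forall col, lt col n -> fsum p (fun r => Rmult (nu r) (A r col)) = IZR 0) ->
     forall r, lt r p -> nu r = IZR 0) ->
 forall r, lt r p -> exists h : nat -> R, forall s, lt s p ->
    fsum n (fun col => Rmult (A s col) (h col)) = if Nat.eqb s r then IZR 1 else IZR 0.
Proof.
move=> Hrank r Hr0.
have Hr : (r < p)%N by apply/ltP.
pose Am : 'M[R]_(p, n) := \matrix_(i, j) A i j.
have rf : row_free Am.
  apply: inj_row_free => v Hv.
  apply/rowP => i; rewrite mxE.
  pose nu := fun r => if insub r is Some j then v ord0 j else 0.
  have Hs : forall col, lt col n -> fsum p (fun r => Rmult (nu r) (A r col)) = IZR 0.
    move=> c /ltP Hc.
    have := congr1 (fun M : 'M[R]_(1,n) => M ord0 (Ordinal Hc)) Hv.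
    rewrite !mxE => H.
    rewrite fsum_big -[X in _ = X]H.
    apply: eq_bigr => j _; rewrite /nu valK mxE //.
  have := Hrank nu Hs i (ltP (ltn_ord i)).
  by rewrite /nu valK.
case/row_freeP: rf => B HB.
exists (fun col => if insub col is Some j then B j (Ordinal Hr) else 0).
move=> s /ltP Hs.
have := congr1 (fun M : 'M[R]_(p,p) => M (Ordinal Hs) (Ordinal Hr)) HB.
rewrite !mxE fsum_big => H.
transitivity ((\sum_j Am (Ordinal Hs) j * B j (Ordinal Hr))).
  apply: eq_bigr => j _; rewrite valK mxE //.
rewrite [LHS]H.
case: (Nat.eqb_spec s r) => [Hsr|Hne].
  have -> : Ordinal Hs = Ordinal Hr by apply: val_inj.
  by rewrite eqxx.
have -> : (Ordinal Hs == Ordinal Hr) = false.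
  by apply/negbTE/negP => /eqP [].
by [].
Qed.
End SurjM.


Open Scope R_scope.


Lemma fsum_ext k F G : (forall i, (i < k)%nat -> F i = G i) -> fsum k F = fsum k G.
Proof. induction k; simpl; intros H; auto. rewrite IHk by (intros; apply H; lia). rewrite H by lia; auto. Qed.

Lemma fsum_plus k F G : fsum k (fun i => F i + G i) = fsum k F + fsum k G.
Proof. induction k; simpl; [lra|rewrite IHk; lra]. Qed.

Lemma fsum_minus k F G : fsum k (fun i => F i - G i) = fsum k F - fsum k G.
Proof. induction k; simpl; [lra|rewrite IHk; lra]. Qed.

Lemma fsum_scal k a F : fsum k (fun i => a * F i) = a * fsum k F.
Proof. induction k; simpl; [lra|rewrite IHk; lra]. Qed.

Lemma fsum_zero k : fsum k (fun _ => 0) = 0.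
Proof. induction k; simpl; [lra|rewrite IHk; lra]. Qed.

Lemma fsum_le k F G : (forall i, (i < k)%nat -> F i <= G i) -> fsum k F <= fsum k G.
Proof. induction k; simpl; intros H; [lra|]. assert (F k <= G k) by (apply H; lia).
  assert (fsum k F <= fsum k G) by (apply IHk; intros; apply H; lia). lra. Qed.

Lemma fsum_nonneg k F : (forall i, (i < k)%nat -> 0 <= F i) -> 0 <= fsum k F.
Proof. intros H. rewrite <- (fsum_zero k). apply fsum_le; auto. Qed.

Lemma fsum_term_le k F j : (forall i, (i < k)%nat -> 0 <= F i) -> (j < k)%nat -> F j <= fsum k F.
Proof. induction k; simpl; intros H Hj; [lia|].
  destruct (Nat.eq_dec j k) as [->|].
  - assert (0 <= fsum k F) by (apply fsum_nonneg; intros; apply H; lia). lra.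
  - assert (F j <= fsum k F) by (apply IHk; [intros; apply H; lia| lia]).
    assert (0 <= F k) by (apply H; lia). lra. Qed.

Lemma fsum_swap a b F : fsum a (fun i => fsum b (fun j => F i j)) = fsum b (fun j => fsum a (fun i => F i j)).
Proof. induction a; simpl. - rewrite fsum_zero; auto.
  - rewrite IHa. rewrite <- fsum_plus. auto. Qed.

Lemma fsum_single M k x : fsum M (fun i => if Nat.eqb k i then x else 0) = if Nat.ltb k M then x else 0.
Proof. induction M; simpl. - destruct (Nat.ltb_spec k 0); [lia|auto].
  - rewrite IHM. destruct (Nat.eqb_spec k M); destruct (Nat.ltb_spec k M); destruct (Nat.ltb_spec k (S M)); try lia; lra. Qed.

Lemma fsum_blocks M n (blk : nat -> nat) X : (forall c, (c < n)%nat -> (blk c < M)%nat) ->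
  fsum M (fun i => fsum n (fun c => if Nat.eqb (blk c) i then X c else 0)) = fsum n X.
Proof. intros H. rewrite fsum_swap. apply fsum_ext. intros c Hc. rewrite fsum_single.
  destruct (Nat.ltb_spec (blk c) M); auto. specialize (H c Hc). lia. Qed.

Lemma fsum_sq_le k a L c : (forall i, (i < k)%nat -> a i ^ 2 <= L i * c i /\ 0 <= L i /\ 0 <= c i) ->
  (fsum k a) ^ 2 <= fsum k L * fsum k c.
Proof. induction k; simpl; intros H; [lra|].
  assert (IH : fsum k a ^ 2 <= fsum k L * fsum k c) by (apply IHk; intros; apply H; lia).
  assert (HL : 0 <= fsum k L) by (apply fsum_nonneg; intros; apply H; lia).
  assert (HC : 0 <= fsum k c) by (apply fsum_nonneg; intros; apply H; lia).
  destruct (H k ltac:(lia)) as [Hk [HLk Hck]].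
  set (A := fsum k a) in *. set (LL := fsum k L) in *. set (C := fsum k c) in *.
  assert (HX : 0 <= L k * C + LL * c k) by nra.
  assert (H4 : (2 * (a k * A)) ^ 2 <= (L k * C + LL * c k) ^ 2).
  { assert ((a k * A) ^ 2 <= (L k * c k) * (LL * C)).
    { replace ((a k * A) ^ 2) with (a k ^ 2 * A ^ 2) by ring. apply Rmult_le_compat; nra. }
    assert (0 <= (L k * C - LL * c k)^2) by apply pow2_ge_0. nra. }
  assert (H5 : 2 * (a k * A) <= L k * C + LL * c k).
  { destruct (Rle_dec (2 * (a k * A)) 0). lra. apply Rsqr_incr_0_var; unfold Rsqr; nra. }
  nra. Qed.

Lemma fsum_cv k (F : nat -> nat -> R) (l : nat -> R) :
  (forall i, (i < k)%nat -> Un_cv (fun j => F j i) (l i)) -> Un_cv (fun j => fsum k (F j)) (fsum k l).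
Proof. induction k; simpl; intros H.
  - intros e He. exists 0%nat. intros. unfold Rdist. rewrite Rminus_0_r, Rabs_R0. lra.
  - apply CV_plus. apply IHk; intros; apply H; lia. apply H; lia. Qed.

Lemma inv_small (e : R) : e > 0 -> exists N, forall j, (N <= j)%nat -> / (INR j + 1) < e.
Proof.
  intros He. destruct (INR_archimed e 1 He) as [N HN]. exists N. intros j Hj.
  apply le_INR in Hj. assert (0 < INR j + 1) by (pose proof (pos_INR j); lra).
  apply (Rmult_lt_reg_l (INR j + 1)); auto. rewrite Rinv_r by lra. nra.
Qed.

Lemma abs_lt_of_sq (x e : R) : e > 0 -> x ^ 2 < e ^ 2 -> Rabs x < e.
Proof. intros He H. destruct (Rcase_abs x); [rewrite Rabs_left by auto|rewrite Rabs_right by auto]; nra. Qed.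

Lemma cauchy_from_bound (u : nat -> R) K : 0 <= K ->
  (forall j k, (u j - u k) ^ 2 <= K * (/ (INR j + 1) + / (INR k + 1))) -> Cauchy_crit u.
Proof.
  intros HK H e He. assert (Hd : e ^ 2 / (2 * K + 1) > 0) by (apply Rdiv_lt_0_compat; nra).
  destruct (inv_small _ Hd) as [N HN]. exists N. intros j k Hj Hk. unfold Rdist.
  apply abs_lt_of_sq; auto. pose proof (HN k Hk) as HN'. specialize (HN j Hj). specialize (H j k).
  assert (0 < / (INR j + 1)) by (apply Rinv_0_lt_compat; pose proof (pos_INR j); lra).
  assert (0 < / (INR k + 1)) by (apply Rinv_0_lt_compat; pose proof (pos_INR k); lra).
  assert (K * (/ (INR j + 1) + / (INR k + 1)) <= K * (2 * (e ^ 2 / (2 * K + 1)))) by (apply Rmult_le_compat_l; lra).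
  assert (K * (2 * (e ^ 2 / (2 * K + 1))) < e ^ 2).
  { assert (e ^ 2 / (2 * K + 1) * (2 * K + 1) = e ^ 2) by (field; lra). nra. }
  lra.
Qed.

Ltac fld := field; repeat split; try (intro; lra); try lra.

Lemma sq_lb a s t : 0 < s -> - (a ^ 2 / (2 * s)) <= a * t + s * t ^ 2 / 2.
Proof.
  intros Hs. assert (0 <= s * (t + a / s) ^ 2) by (apply Rmult_le_pos; [lra|apply pow2_ge_0]).
  assert (s * (t + a / s) ^ 2 = s * t ^ 2 + 2 * t * a + a ^ 2 / s) by fld.
  assert (a ^ 2 / (2 * s) = a ^ 2 / s / 2) by fld. nra.
Qed.

Lemma fsum_eq0 k F : (forall i, (i < k)%nat -> F i = 0) -> fsum k F = 0.
Proof. intros H. rewrite (fsum_ext k F (fun _ => 0)) by auto. apply fsum_zero. Qed.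

Lemma prod_lb x y w : 0 < w -> - (w * x ^ 2 / 2 + y ^ 2 / w / 2) <= x * y.
Proof.
  intros Hw. assert (0 <= w * (x + y / w) ^ 2) by (apply Rmult_le_pos; [lra|apply pow2_ge_0]).
  assert (w * (x + y / w) ^ 2 = w * x ^ 2 + 2 * x * y + y ^ 2 / w) by fld. nra.
Qed.

Lemma fsum_cs k (W x y : nat -> R) : (forall i, (i < k)%nat -> 0 <= W i) ->
  (fsum k (fun i => W i * x i * y i)) ^ 2 <= fsum k (fun i => W i * x i ^ 2) * fsum k (fun i => W i * y i ^ 2).
Proof.
  intros HW. apply fsum_sq_le. intros i Hi. specialize (HW i Hi). split; [|split].
  - right. ring.
  - apply Rmult_le_pos; [auto|apply pow2_ge_0].
  - apply Rmult_le_pos; [auto|apply pow2_ge_0].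
Qed.

Lemma le_of_sq_le (S K : R) : 0 <= K -> S ^ 2 <= K ^ 2 -> S <= K.
Proof. intros HK H. destruct (Rle_dec S 0). lra. apply Rsqr_incr_0_var; unfold Rsqr; nra. Qed.

Lemma fsum_lin2 k F G a : fsum k F - a * fsum k G = fsum k (fun i => F i - a * G i).
Proof. rewrite fsum_minus, fsum_scal. ring. Qed.
Lemma fsum_lin3 k F G a : a * (fsum k F - fsum k G) = fsum k (fun i => a * (F i - G i)).
Proof. rewrite fsum_scal, fsum_minus. ring. Qed.

Lemma div_nonneg x y : 0 <= x -> 0 < y -> 0 <= x / y.
Proof. intros; unfold Rdiv; apply Rmult_le_pos; [auto|apply Rlt_le, Rinv_0_lt_compat; auto]. Qed.



Lemma abs_le_inv x K : Rabs x <= K -> - K <= x <= K.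
Proof. intros H. destruct (Rcase_abs x); [rewrite Rabs_left in H|rewrite Rabs_right in H]; lra. Qed.

Lemma cv_ge (u : nat -> R) l a : Un_cv u l -> (forall j, a <= u j) -> a <= l.
Proof.
  intros Hu Ha. destruct (Rle_dec a l); auto. exfalso.
  destruct (Hu ((a - l) / 2) ltac:(lra)) as [N HN]. specialize (HN N (le_n _)). specialize (Ha N).
  unfold Rdist in HN. apply Rabs_def2 in HN. lra.
Qed.

Lemma cv_le2 (u a : nat -> R) l a0 : Un_cv u l -> Un_cv a a0 -> (forall j, a j <= u j) -> a0 <= l.
Proof.
  intros Hu Ha H. assert (0 <= l - a0).
  { apply (cv_ge (fun j => u j - a j) (l - a0)); [apply CV_minus; auto|]. intros j; specialize (H j); lra. }
  lra.
Qed.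

Lemma cv_inv_S : Un_cv (fun j => / (INR j + 1)) 0.
Proof.
  intros e He. destruct (inv_small e He) as [N HN]. exists N. intros j Hj. unfold Rdist.
  rewrite Rminus_0_r. assert (0 < / (INR j + 1)) by (apply Rinv_0_lt_compat; pose proof (pos_INR j); lra).
  rewrite Rabs_right by lra. apply HN; lia.
Qed.

Lemma cv_sub (u : nat -> R) l (phi : nat -> nat) : Un_cv u l -> (forall j, (j <= phi j)%nat) -> Un_cv (fun j => u (phi j)) l.
Proof. intros Hu Hphi e He. destruct (Hu e He) as [N HN]. exists N. intros j Hj. apply HN. specialize (Hphi j). lia. Qed.

Lemma BW1 (s : nat -> R) K : (forall j, Rabs (s j) <= K) ->
  exists psi l, (forall j, (j <= psi j)%nat) /\ Un_cv (fun j => s (psi j)) l.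
Proof.
  intros HK. destruct (Bolzano_Weierstrass s (fun x => - K <= x <= K) (compact_P3 (- K) K)) as [l Hl].
  { intros j. specialize (HK j). apply abs_le_inv in HK. lra. }
  assert (Hg : forall N j, exists p0, (N <= p0)%nat /\ Rabs (s p0 - l) < / (INR j + 1)).
  { intros N j. assert (Hpos : 0 < / (INR j + 1)) by (apply Rinv_0_lt_compat; pose proof (pos_INR j); lra).
    destruct (Hl (fun x => Rabs (x - l) < / (INR j + 1)) N) as [p0 Hp0].
    - exists (mkposreal _ Hpos). intros y Hy. unfold disc in Hy. simpl in Hy. auto.
    - exists p0; auto. }
  set (g := fun N j => proj1_sig (constructive_indefinite_description _ (Hg N j))).
  assert (Hg1 : forall N j, (N <= g N j)%nat /\ Rabs (s (g N j) - l) < / (INR j + 1)).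
  { intros N j. unfold g. destruct (constructive_indefinite_description _ _); auto. }
  set (psi := fix psi j := match j with O => g O O | S j' => g (S (psi j')) (S j') end).
  assert (Hpsi : forall j, (j <= psi j)%nat).
  { induction j; simpl; [lia|]. destruct (Hg1 (S (psi j)) (S j)). lia. }
  exists psi, l. split; auto.
  intros e He. destruct (inv_small e He) as [N HN]. exists N. intros j Hj. unfold Rdist.
  assert (Rabs (s (psi j) - l) < / (INR j + 1)).
  { destruct j; simpl; apply Hg1. }
  specialize (HN j Hj). lra.
Qed.

Lemma BWm (m : nat) (u : nat -> nat -> R) (K : nat -> R) :
  (forall j r, (r < m)%nat -> Rabs (u j r) <= K r) ->
  exists phi L, (forall j, (j <= phi j)%nat) /\ forall r, (r < m)%nat -> Un_cv (fun j => u (phi j) r) (L r).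
Proof.
  induction m; intros HK.
  - exists (fun j => j), (fun _ => 0). split; [lia|]. intros; lia.
  - destruct IHm as [phi [L [Hphi HL]]]. { intros; apply HK; lia. }
    destruct (BW1 (fun j => u (phi j) m) (K m)) as [psi [l [Hpsi Hl]]]. { intros; apply HK; lia. }
    exists (fun j => phi (psi j)), (fun r => if Nat.eqb r m then l else L r). split.
    + intros j. specialize (Hpsi j). specialize (Hphi (psi j)). lia.
    + intros r Hr. destruct (Nat.eqb_spec r m).
      * subst. auto.
      * apply (cv_sub (fun j => u (phi j) r)); auto. apply HL. lia.
Qed.

Lemma attain_max (m : nat) (P : (nat -> R) -> Prop) (F : (nat -> R) -> R) (K : nat -> R) (B : R) :
  (exists x, P x) ->
  (forall x, P x -> forall r, (r < m)%nat -> Rabs (x r) <= K r) ->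
  (forall u L, (forall j, P (u j)) -> (forall r, (r < m)%nat -> Un_cv (fun j => u j r) (L r)) -> P L) ->
  (forall u L, (forall r, (r < m)%nat -> Un_cv (fun j => u j r) (L r)) -> Un_cv (fun j => F (u j)) (F L)) ->
  (forall x, P x -> F x <= B) ->
  exists x, P x /\ forall y, P y -> F y <= F x.
Proof.
  intros [x0 Hx0] HK Hcl Hcont HB.
  set (S := fun y => exists x, P x /\ y = F x).
  destruct (completeness S) as [s [Hub Hlub]].
  { exists B. intros y [x [Hx ->]]. auto. }
  { exists (F x0), x0; auto. }
  assert (Hap : forall j, exists x, P x /\ s - / (INR j + 1) < F x).
  { intros j. apply NNPP. intros Hn.
    assert (is_upper_bound S (s - / (INR j + 1))).
    { intros y [x [Hx ->]]. destruct (Rle_dec (F x) (s - / (INR j + 1))); auto. exfalso. apply Hn. exists x. split; auto; lra. }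
    specialize (Hlub _ H). assert (0 < / (INR j + 1)) by (apply Rinv_0_lt_compat; pose proof (pos_INR j); lra). lra. }
  set (u := fun j => proj1_sig (constructive_indefinite_description _ (Hap j))).
  assert (Hu : forall j, P (u j) /\ s - / (INR j + 1) < F (u j)).
  { intros j. unfold u. destruct (constructive_indefinite_description _ _); auto. }
  destruct (BWm m u K) as [phi [L [Hphi HL]]]. { intros j r Hr. apply HK; auto. apply Hu. }
  assert (HPL : P L) by (apply (Hcl (fun j => u (phi j))); auto; intros; apply Hu).
  exists L. split; auto.
  assert (HFL : s <= F L).
  { apply (cv_le2 (fun j => F (u (phi j))) (fun j => s - / (INR j + 1))).
    - apply (Hcont (fun j => u (phi j))); auto.
    - assert (Hc : Un_cv (fun j => s - / (INR j + 1)) (s - 0)).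
      { apply CV_minus; [intros e He; exists 0%nat; intros; unfold Rdist; rewrite Rminus_diag, Rabs_R0; auto|apply cv_inv_S]. }
      rewrite Rminus_0_r in Hc. exact Hc.
    - intros j. destruct (Hu (phi j)) as [_ H1]. specialize (Hphi j).
      assert (/ (INR (phi j) + 1) <= / (INR j + 1)).
      { apply Rinv_le_contravar; [pose proof (pos_INR j); lra|]. apply le_INR in Hphi. lra. }
      lra. }
  intros y Hy. specialize (Hub (F y) (ex_intro _ y (conj Hy eq_refl))). lra.
Qed.

Lemma cv_const a : Un_cv (fun _ => a) a.
Proof. intros e He; exists 0%nat; intros; unfold Rdist; rewrite Rminus_diag, Rabs_R0; auto. Qed.

Lemma cv_ext (u v : nat -> R) l : (forall j, u j = v j) -> Un_cv u l -> Un_cv v l.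
Proof. intros H Hu e He. destruct (Hu e He) as [N HN]. exists N. intros j Hj. rewrite <- H. auto. Qed.

Lemma cv_sq (u : nat -> R) l : Un_cv u l -> Un_cv (fun j => u j ^ 2) (l ^ 2).
Proof.
  intros Hu. replace (l ^ 2) with (l * l) by ring. apply (cv_ext (fun j => u j * u j)); [intros; ring|].
  apply CV_mult; auto.
Qed.

Lemma fsum_split a b' F : fsum (a + b') F = fsum a F + fsum b' (fun j => F (a + j)%nat).
Proof. induction b'; simpl. - rewrite Nat.add_0_r. ring. - rewrite Nat.add_succ_r. simpl. rewrite IHb'. ring. Qed.

Lemma fsum_delta k r (x : nat -> R) : (r < k)%nat -> fsum k (fun s => x s * (if Nat.eqb s r then 1 else 0)) = x r.
Proof.
  induction k; intros Hr; [lia|]. simpl. destruct (Nat.eqb_spec k r).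
  - subst. rewrite fsum_eq0; [ring|]. intros i Hi. destruct (Nat.eqb_spec i r); [lia|ring].
  - rewrite IHk by lia. ring.
Qed.



Lemma lim_ineq (a B K : R) : 0 <= K ->
  (forall e, e > 0 -> forall h0, h0 > 0 -> exists h, 0 < h <= h0 /\ a - e < B + h * K) -> a <= B.
Proof.
  intros HK H. destruct (Rle_dec a B) as [|Hn]; auto. exfalso.
  set (e := (a - B) / 2). assert (He : e > 0) by (unfold e; lra).
  assert (Hh0 : e / (K + 1) > 0) by (apply Rdiv_lt_0_compat; lra).
  destruct (H e He (e / (K + 1)) Hh0) as [h [[Hh1 Hh2] Hh3]].
  assert (h * K <= e / (K + 1) * K) by nra.
  assert (e / (K + 1) * K <= e).
  { assert (e / (K + 1) * (K + 1) = e) by fld. nra. }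
  unfold e in *. lra.
Qed.

Section Main.
Variables (n p q M Mbar : nat) (blk rA rC : nat -> nat) (E : nat -> nat -> bool)
  (A C : nat -> nat -> R) (b c : nat -> R)
  (f : nat -> (nat -> R) -> R) (gf : nat -> (nat -> R) -> (nat -> R))
  (sigma Lf Ld : nat -> R).
Hypothesis Hblk : forall col, (col < n)%nat -> (blk col < M)%nat.
Hypothesis HEA : forall r col, (r < p)%nat -> (col < n)%nat ->
           E (rA r) (blk col) = false -> A r col = 0.
Hypothesis HEC : forall r col, (r < q)%nat -> (col < n)%nat ->
           E (rC r) (blk col) = false -> C r col = 0.
Hypothesis Hloc : forall i x y, (i < M)%nat -> sameblk n blk i x y -> f i x = f i y.
Hypothesis Hsig : forall i, (i < M)%nat -> 0 < sigma i.
Hypothesis Hsc : forall i x y t, (i < M)%nat -> 0 <= t <= 1 ->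
      f i (vadd (vscal t x) (vscal (1 - t) y))
      <= t * f i x + (1 - t) * f i y
         - sigma i / 2 * t * (1 - t) * normsq_blk n blk i (vsub x y).
Hypothesis Hgrad : forall i x d, (i < M)%nat ->
      derivable_pt_lim (fun t => f i (vadd x (vscal t d))) 0
        (fsum n (fun col => if Nat.eqb (blk col) i then gf i x col * d col else 0)).
Hypothesis Hrank : forall nu : nat -> R,
      (forall col, (col < n)%nat -> fsum p (fun r => nu r * A r col) = 0) ->
      forall r, (r < p)%nat -> nu r = 0.
Hypothesis Hslater : exists zt : nat -> R,
      (forall r, (r < p)%nat -> fsum n (fun col => A r col * zt col) = b r) /\
      (forall r, (r < q)%nat -> fsum n (fun col => C r col * zt col) < c r).
Hypothesis HLd : forall i, (i < M)%nat -> is_lub (opnorm_set n p q blk rA rC E A C i) (Ld i * sigma i).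
Hypothesis HW : forall r, (r < p + q)%nat -> 0 < Wd p M rA rC E Ld r.

Definition SNv (v : nat -> R) := fsum n (fun col => sigma (blk col) * v col ^ 2).

Lemma SN_blocks v : fsum M (fun i => sigma i * normsq_blk n blk i v) = SNv v.
Proof.
  unfold SNv, normsq_blk. rewrite <- (fsum_blocks M n blk (fun col => sigma (blk col) * v col ^ 2)) by auto.
  apply fsum_ext; intros i Hi. rewrite <- fsum_scal. apply fsum_ext; intros col Hc.
  destruct (Nat.eqb_spec (blk col) i); subst; ring.
Qed.

Lemma SNv_nonneg v : 0 <= SNv v.
Proof. apply fsum_nonneg; intros col Hc. pose proof (Hsig _ (Hblk col Hc)). pose proof (pow2_ge_0 (v col)). nra. Qed.

Definition comb (t : R) (x y : nat -> R) := vadd (vscal t x) (vscal (1 - t) y).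

Lemma fsep_sc x y t : 0 <= t <= 1 ->
  fsep M f (comb t x y) <= t * fsep M f x + (1 - t) * fsep M f y - t * (1 - t) / 2 * SNv (vsub x y).
Proof.
  intros Ht. unfold fsep. rewrite <- SN_blocks.
  assert (forall k, (k <= M)%nat -> fsum k (fun i => f i (comb t x y)) <= t * fsum k (fun i => f i x) + (1 - t) * fsum k (fun i => f i y) -
    t * (1 - t) / 2 * fsum k (fun i => sigma i * normsq_blk n blk i (vsub x y))).
  { induction k; simpl; intros Hk. lra. specialize (IHk ltac:(lia)).
    pose proof (Hsc k x y t ltac:(lia) Ht). fold (comb t x y) in H. lra. }
  apply H; lia.
Qed.

Lemma Gz_comb t x y r : Gz n p A C (comb t x y) r = t * Gz n p A C x r + (1 - t) * Gz n p A C y r.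
Proof. unfold Gz, comb, vadd, vscal. rewrite <- !fsum_scal, <- fsum_plus. apply fsum_ext; intros; ring. Qed.

Lemma lagr_sc x y t l : 0 <= t <= 1 ->
  lagr n p q M A C b c f (comb t x y) l <= t * lagr n p q M A C b c f x l + (1 - t) * lagr n p q M A C b c f y l
     - t * (1 - t) / 2 * SNv (vsub x y).
Proof.
  intros Ht. unfold lagr. pose proof (fsep_sc x y t Ht).
  assert (fsum (p + q) (fun r => l r * resid n p A C b c (comb t x y) r) =
     t * fsum (p + q) (fun r => l r * resid n p A C b c x r) + (1 - t) * fsum (p + q) (fun r => l r * resid n p A C b c y r)).
  { rewrite <- !fsum_scal, <- fsum_plus. apply fsum_ext; intros. unfold resid. rewrite Gz_comb. ring. }
  lra.
Qed.

Lemma gap l z z' : argminL n p q M A C b c f l z ->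
  lagr n p q M A C b c f z' l - lagr n p q M A C b c f z l >= SNv (vsub z' z) / 2.
Proof.
  intros Hz.
  assert (Ht : forall t, 0 < t <= 1 -> lagr n p q M A C b c f z' l - lagr n p q M A C b c f z l >= (1 - t) / 2 * SNv (vsub z' z)).
  { intros t Ht. pose proof (lagr_sc z' z t l ltac:(lra)). pose proof (Hz (comb t z' z)).
    assert (t * (lagr n p q M A C b c f z' l - lagr n p q M A C b c f z l) >= t * ((1 - t) / 2 * SNv (vsub z' z))) by nra.
    apply Rle_ge; apply Rmult_le_reg_l with t; lra. }
  remember (lagr n p q M A C b c f z l) as L0. remember (lagr n p q M A C b c f z' l) as L1.
  remember (SNv (vsub z' z)) as S.
  pose proof (Ht 1 ltac:(lra)). 
  destruct (Rge_dec (L1 - L0) (S / 2)) as [|Hn]; auto. exfalso.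
  assert (HS : S > 0) by lra.
  set (t := Rmin 1 ((S / 2 - (L1 - L0)) / S)).
  assert (0 < (S / 2 - (L1 - L0)) / S) by (apply Rdiv_lt_0_compat; lra).
  assert (0 < t <= 1) by (unfold t; split; [apply Rmin_glb_lt; lra | apply Rmin_l]).
  assert (t * S <= S / 2 - (L1 - L0)).
  { assert (t <= (S / 2 - (L1 - L0)) / S) by apply Rmin_r.
    assert ((S / 2 - (L1 - L0)) / S * S = S / 2 - (L1 - L0)) by fld. nra. }
  pose proof (Ht t H1). nra.
Qed.

Lemma normsq_nonneg i v : 0 <= normsq_blk n blk i v.
Proof. apply fsum_nonneg; intros. destruct (Nat.eqb _ _); [apply pow2_ge_0|lra]. Qed.

Lemma foi_i i x y : (i < M)%nat ->
  f i x + fsum n (fun col => if Nat.eqb (blk col) i then gf i x col * (y col - x col) else 0)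
   + sigma i / 2 * normsq_blk n blk i (vsub y x) <= f i y.
Proof.
  intros Hi. set (D := fsum n (fun col => if Nat.eqb (blk col) i then gf i x col * (y col - x col) else 0)).
  set (N := normsq_blk n blk i (vsub y x)).
  pose proof (Hgrad i x (vsub y x) Hi) as Hd. fold D in Hd.
  assert (HD : D = fsum n (fun col => if Nat.eqb (blk col) i then gf i x col * vsub y x col else 0)) by reflexivity.
  rewrite <- HD in Hd.
  assert (Hg0 : vadd x (vscal 0 (vsub y x)) = x) by (apply functional_extensionality; intros; unfold vadd, vscal; ring).
  assert (Hgt : forall t, vadd x (vscal t (vsub y x)) = vadd (vscal t y) (vscal (1 - t) x))
    by (intros; apply functional_extensionality; intros; unfold vadd, vscal, vsub; ring).
  pose proof (Hsig i Hi). pose proof (normsq_nonneg i (vsub y x)). fold N in H0.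
  apply (lim_ineq (f i x + D + sigma i / 2 * N) (f i y) (sigma i / 2 * N)); [nra|].
  intros e He h0 Hh0.
  destruct (Hd e He) as [del Hdel].
  set (h := Rmin (del / 2) (Rmin h0 1)).
  assert (Hh : 0 < h) by (unfold h; pose proof (cond_pos del); repeat apply Rmin_glb_lt; lra).
  assert (Hh1 : h <= 1) by (unfold h; eapply Rle_trans; [apply Rmin_r|apply Rmin_r]).
  assert (Hh2 : h <= h0) by (unfold h; eapply Rle_trans; [apply Rmin_r|apply Rmin_l]).
  assert (Hh3 : h < del) by (unfold h; pose proof (cond_pos del); eapply Rle_lt_trans; [apply Rmin_l|lra]).
  exists h. split; [lra|].
  specialize (Hdel h ltac:(lra) ltac:(rewrite Rabs_pos_eq; lra)).
  rewrite Rplus_0_l, Hg0, Hgt in Hdel.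
  pose proof (Hsc i y x h Hi ltac:(lra)). fold N in H1.
  apply Rabs_def2 in Hdel. destruct Hdel as [Hd1 Hd2].
  set (g := f i (vadd (vscal h y) (vscal (1 - h) x))) in *.
  assert (Hq : (g - f i x) / h <= f i y - f i x - sigma i / 2 * (1 - h) * N).
  { apply (Rmult_le_reg_l h); [lra|]. field_simplify; [|lra]. nra. }
  nra.
Qed.

Local Notation Lg z l := (lagr n p q M A C b c f z l).
Definition agrad (x l : nat -> R) (col : nat) := gf (blk col) x col + fsum (p + q) (fun r => l r * Gm p A C r col).

Lemma resid_diff y x r : resid n p A C b c y r - resid n p A C b c x r = fsum n (fun col => Gm p A C r col * (y col - x col)).
Proof. unfold resid. replace (Gz n p A C y r - gv p b c r - (Gz n p A C x r - gv p b c r)) with (Gz n p A C y r - Gz n p A C x r) by ring.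
  unfold Gz. rewrite <- fsum_minus. apply fsum_ext; intros; ring. Qed.

Lemma lin_part y x l : fsum (p + q) (fun r => l r * resid n p A C b c y r) =
  fsum (p + q) (fun r => l r * resid n p A C b c x r) + fsum n (fun col => fsum (p + q) (fun r => l r * Gm p A C r col) * (y col - x col)).
Proof.
  assert (fsum (p + q) (fun r => l r * resid n p A C b c y r) - fsum (p + q) (fun r => l r * resid n p A C b c x r)
    = fsum n (fun col => fsum (p + q) (fun r => l r * Gm p A C r col) * (y col - x col))); [|lra].
  rewrite <- fsum_minus.
  transitivity (fsum (p + q) (fun r => fsum n (fun col => l r * Gm p A C r col * (y col - x col)))).
  - apply fsum_ext; intros r Hr. rewrite <- Rmult_minus_distr_l, resid_diff, <- fsum_scal. apply fsum_ext; intros; ring.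
  - rewrite fsum_swap. apply fsum_ext; intros col Hc. rewrite Rmult_comm, <- fsum_scal. apply fsum_ext; intros; ring.
Qed.

Lemma foi_lagr x y l : Lg x l + fsum n (fun col => agrad x l col * (y col - x col)) + SNv (vsub y x) / 2 <= Lg y l.
Proof.
  unfold lagr, fsep. rewrite (lin_part y x l).
  assert (H1 : fsum M (fun i => f i x + fsum n (fun col => if Nat.eqb (blk col) i then gf i x col * (y col - x col) else 0)
   + sigma i / 2 * normsq_blk n blk i (vsub y x)) <= fsum M (fun i => f i y)).
  { apply fsum_le; intros i Hi. apply foi_i; auto. }
  rewrite !fsum_plus in H1.
  assert (H2 : fsum M (fun i => fsum n (fun col => if Nat.eqb (blk col) i then gf i x col * (y col - x col) else 0))
     = fsum n (fun col => gf (blk col) x col * (y col - x col))).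
  { rewrite <- (fsum_blocks M n blk (fun col => gf (blk col) x col * (y col - x col))) by auto.
    apply fsum_ext; intros i Hi; apply fsum_ext; intros col Hc. destruct (Nat.eqb_spec (blk col) i); subst; auto. }
  assert (H3 : fsum M (fun i => sigma i / 2 * normsq_blk n blk i (vsub y x)) = SNv (vsub y x) / 2).
  { rewrite <- SN_blocks. unfold Rdiv. rewrite Rmult_comm, <- fsum_scal. apply fsum_ext; intros; ring. }
  rewrite H2, H3 in H1. unfold agrad.
  assert (fsum n (fun col => (gf (blk col) x col + fsum (p + q) (fun r => l r * Gm p A C r col)) * (y col - x col)) =
    fsum n (fun col => gf (blk col) x col * (y col - x col)) + fsum n (fun col => fsum (p + q) (fun r => l r * Gm p A C r col) * (y col - x col))).
  { rewrite <- fsum_plus. apply fsum_ext; intros; ring. }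
  lra.
Qed.

Lemma sigma_blk col : (col < n)%nat -> 0 < sigma (blk col).
Proof. intros; apply Hsig, Hblk; auto. Qed.

Lemma lagr_lower l : exists LB, forall z, LB <= Lg z l.
Proof.
  set (z0 := fun _ : nat => 0).
  exists (Lg z0 l - fsum n (fun col => agrad z0 l col ^ 2 / (2 * sigma (blk col)))).
  intros z. pose proof (foi_lagr z0 z l).
  assert (fsum n (fun col => - (agrad z0 l col ^ 2 / (2 * sigma (blk col)))) <=
     fsum n (fun col => agrad z0 l col * (z col - z0 col)) + SNv (vsub z z0) / 2).
  { unfold SNv. unfold Rdiv at 2. rewrite Rmult_comm, <- fsum_scal, <- fsum_plus. apply fsum_le; intros col Hc.
    pose proof (sigma_blk col Hc). unfold vsub, z0. rewrite Rminus_0_r.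
    pose proof (sq_lb (agrad (fun _ => 0) l col) (sigma (blk col)) (z col) H0). lra. }
  assert (fsum n (fun col => - (agrad z0 l col ^ 2 / (2 * sigma (blk col)))) =
    -1 * fsum n (fun col => agrad z0 l col ^ 2 / (2 * sigma (blk col)))).
  { rewrite <- fsum_scal. apply fsum_ext; intros; ring. }
  lra.
Qed.

Lemma exists_argmin l : exists z, argminL n p q M A C b c f l z.
Proof.
  destruct (lagr_lower l) as [LB HLB].
  set (S := fun y => exists z, y = - Lg z l).
  assert (Hb : bound S) by (exists (- LB); intros y [z ->]; specialize (HLB z); lra).
  assert (Hne : exists y, S y) by (exists (- Lg (fun _ => 0) l); exists (fun _ => 0); auto).
  destruct (completeness S Hb Hne) as [m' [Hub Hlub]].
  set (m := - m').
  assert (Hm : forall z, m <= Lg z l) by (intros z; specialize (Hub (- Lg z l) (ex_intro _ z eq_refl)); unfold m; lra).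
  assert (Hap : forall e, e > 0 -> exists z, Lg z l < m + e).
  { intros e He. apply NNPP. intros Hn.
    assert (is_upper_bound S (m' - e)).
    { intros y [z ->]. destruct (Rlt_dec (Lg z l) (m + e)) as [Hl|Hl]; [exfalso; apply Hn; eauto|]. unfold m in Hl. lra. }
    specialize (Hlub _ H). lra. }
  assert (Hzs : forall j, exists z, Lg z l < m + / (INR j + 1)).
  { intros j. apply Hap. apply Rinv_0_lt_compat. pose proof (pos_INR j); lra. }
  set (zs := fun j => proj1_sig (constructive_indefinite_description _ (Hzs j))).
  assert (Hzs1 : forall j, Lg (zs j) l < m + / (INR j + 1)).
  { intros j. unfold zs. destruct (constructive_indefinite_description _ (Hzs j)); auto. }
  assert (HSN : forall j k, SNv (vsub (zs j) (zs k)) <= 4 * (/ (INR j + 1) + / (INR k + 1))).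
  { intros j k. pose proof (lagr_sc (zs j) (zs k) (1/2) l ltac:(lra)). pose proof (Hm (comb (1/2) (zs j) (zs k))).
    pose proof (Hzs1 j). pose proof (Hzs1 k). nra. }
  assert (Hcau : forall col, (col < n)%nat -> Cauchy_crit (fun j => zs j col)).
  { intros col Hc. pose proof (sigma_blk col Hc).
    apply (cauchy_from_bound _ (4 / sigma (blk col))); [apply Rlt_le, Rdiv_lt_0_compat; lra|].
    intros j k. specialize (HSN j k).
    assert (sigma (blk col) * (zs j col - zs k col) ^ 2 <= SNv (vsub (zs j) (zs k))).
    { unfold SNv. apply (fsum_term_le n (fun col0 => sigma (blk col0) * vsub (zs j) (zs k) col0 ^ 2) col); auto.
      intros i Hi. apply Rmult_le_pos; [apply Rlt_le, sigma_blk; auto|apply pow2_ge_0]. }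
    apply (Rmult_le_reg_l (sigma (blk col))); auto.
    replace (sigma (blk col) * (4 / sigma (blk col) * (/ (INR j + 1) + / (INR k + 1)))) with
      (4 * (/ (INR j + 1) + / (INR k + 1))) by (pose proof (pos_INR j); pose proof (pos_INR k); fld). lra. }
  set (zinf := fun col => match Compare_dec.lt_dec col n with
                 | left H => proj1_sig (R_complete _ (Hcau col H)) | right _ => 0 end).
  assert (Hcv : forall col, (col < n)%nat -> Un_cv (fun j => zs j col) (zinf col)).
  { intros col Hc. unfold zinf. destruct (Compare_dec.lt_dec col n); [|lia]. destruct (R_complete _ _); auto. }
  exists zinf. intros z'. apply Rle_trans with m; auto.
  assert (Hcv2 : Un_cv (fun j => fsum n (fun col => agrad zinf l col * (zs j col - zinf col)))
                   (fsum n (fun col => agrad zinf l col * (zinf col - zinf col)))).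
  { apply fsum_cv. intros col Hc. apply CV_mult. intros e He; exists 0%nat; intros; unfold Rdist; rewrite Rminus_diag, Rabs_R0; auto.
    apply CV_minus; auto. intros e He; exists 0%nat; intros; unfold Rdist; rewrite Rminus_diag, Rabs_R0; auto. }
  replace (fsum n (fun col => agrad zinf l col * (zinf col - zinf col))) with 0 in Hcv2
    by (rewrite <- (fsum_zero n); apply fsum_ext; intros; ring).
  apply (lim_ineq _ _ 0 (Rle_refl 0)). intros e He h0 Hh0. exists h0. split; [lra|].
  destruct (Hcv2 (e / 2) ltac:(lra)) as [N1 HN1].
  destruct (inv_small (e / 2) ltac:(lra)) as [N2 HN2].
  set (j := max N1 N2). specialize (HN1 j ltac:(unfold j; lia)). specialize (HN2 j ltac:(unfold j; lia)).
  pose proof (foi_lagr zinf (zs j) l). pose proof (SNv_nonneg (vsub (zs j) zinf)). pose proof (Hzs1 j).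
  unfold Rdist in HN1. rewrite Rminus_0_r in HN1. apply Rabs_def2 in HN1. lra.
Qed.

Definition arow (v : nat -> R) r i := fsum n (fun col => if Nat.eqb (blk col) i then Gm p A C r col * v col else 0).

Lemma Gm_zero r col : (r < p + q)%nat -> (col < n)%nat -> E (rowblk p rA rC r) (blk col) = false -> Gm p A C r col = 0.
Proof.
  intros Hr Hc HE. unfold Gm, rowblk in *. destruct (Nat.ltb_spec r p).
  - apply HEA; auto.
  - apply HEC; auto; lia.
Qed.

Lemma arow_zero v r i : (r < p + q)%nat -> E (rowblk p rA rC r) i = false -> arow v r i = 0.
Proof.
  intros Hr HE. unfold arow. apply fsum_eq0; intros col Hc.
  destruct (Nat.eqb_spec (blk col) i); auto. subst. rewrite (Gm_zero r col Hr Hc HE); ring.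
Qed.

Lemma Gz_arow v r : Gz n p A C v r = fsum M (fun i => arow v r i).
Proof.
  unfold Gz, arow. rewrite (fsum_blocks M n blk (fun col => Gm p A C r col * v col)) by auto. auto.
Qed.

Lemma Ld_bound i v : (i < M)%nat ->
  fsum (p + q) (fun r => if E (rowblk p rA rC r) i then arow v r i ^ 2 else 0) <= Ld i * sigma i * normsq_blk n blk i v.
Proof.
  intros Hi. pose proof (normsq_nonneg i v) as HN0. set (N := normsq_blk n blk i v) in *.
  destruct (Req_dec N 0) as [HN|HN].
  - rewrite HN, Rmult_0_r. apply Rle_trans with (fsum (p + q) (fun _ => 0)); [|rewrite fsum_zero; lra]. apply fsum_le; intros r Hr.
    destruct (E _ i); [|lra].
    assert (arow v r i = 0).
    { unfold arow. apply fsum_eq0; intros col Hc.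
      destruct (Nat.eqb_spec (blk col) i); auto.
      assert (v col ^ 2 <= N).
      { unfold N, normsq_blk. replace (v col ^ 2) with (if Nat.eqb (blk col) i then v col ^ 2 else 0)
          by (destruct (Nat.eqb_spec (blk col) i); tauto).
        apply (fsum_term_le n (fun col0 => if Nat.eqb (blk col0) i then v col0 ^ 2 else 0)); auto.
        intros; destruct (Nat.eqb _ _); [apply pow2_ge_0|lra]. }
      assert (v col = 0) by nra. rewrite H0; ring. }
    rewrite H; lra.
  - assert (HNp : 0 < N) by lra. set (sN := sqrt N). assert (HsN : 0 < sN) by (apply sqrt_lt_R0; auto).
    assert (HsN2 : sN * sN = N) by (apply sqrt_sqrt; lra).
    set (x := fun col => v col / sN).
    assert (Hx : normsq_blk n blk i x = 1).
    { unfold normsq_blk. transitivity (/ N * N); [|field; lra]. unfold N at 2. unfold normsq_blk. rewrite <- fsum_scal.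
      apply fsum_ext; intros. destruct (Nat.eqb _ _); [|ring]. unfold x. rewrite <- HsN2. field. lra. }
    assert (Hy : opnorm_set n p q blk rA rC E A C i
      (fsum (p + q) (fun r => if E (rowblk p rA rC r) i then arow v r i ^ 2 else 0) / N)).
    { exists x. split; [lra|]. unfold Rdiv. rewrite Rmult_comm, <- fsum_scal. apply fsum_ext; intros r Hr.
      destruct (E _ i); [|ring]. unfold arow.
      replace (fsum n (fun col => if Nat.eqb (blk col) i then Gm p A C r col * x col else 0)) with
        (/ sN * fsum n (fun col => if Nat.eqb (blk col) i then Gm p A C r col * v col else 0)).
      + rewrite <- HsN2. field. lra.
      + rewrite <- fsum_scal. apply fsum_ext; intros. destruct (Nat.eqb _ _); [|ring]. unfold x. field. lra. }
    destruct (HLd i Hi) as [Hub _]. specialize (Hub _ Hy).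
    apply (Rmult_le_compat_r N) in Hub; [|lra]. unfold Rdiv in Hub.
    rewrite Rmult_assoc, Rinv_l, Rmult_1_r in Hub; lra.
Qed.

Lemma Ld_nonneg i : (i < M)%nat -> 0 <= Ld i.
Proof.
  intros Hi. destruct (HLd i Hi) as [Hub _].
  assert (H0 : opnorm_set n p q blk rA rC E A C i 0).
  { exists (fun _ => 0). split.
    - unfold normsq_blk. rewrite fsum_eq0; [lra|]. intros; destruct (Nat.eqb _ _); ring.
    - symmetry. apply fsum_eq0; intros. destruct (E _ _); auto.
      rewrite fsum_eq0; [simpl; ring|].
      intros; destruct (Nat.eqb _ _); ring. }
  specialize (Hub 0 H0). pose proof (Hsig i Hi).
  destruct (Rle_dec 0 (Ld i)); auto. nra.
Qed.

Lemma key_ineq v : fsum (p + q) (fun r => Gz n p A C v r ^ 2 / Wd p M rA rC E Ld r) <= SNv v.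
Proof.
  set (cc := fun r i => if E (rowblk p rA rC r) i then
                (if Rlt_dec 0 (Ld i) then arow v r i ^ 2 / Ld i else 0) else 0).
  apply Rle_trans with (fsum (p + q) (fun r => fsum M (fun i => cc r i))).
  - apply fsum_le; intros r Hr. pose proof (HW r Hr) as HWr.
    assert (Hsq : Gz n p A C v r ^ 2 <= Wd p M rA rC E Ld r * fsum M (fun i => cc r i)).
    { rewrite Gz_arow. unfold Wd. apply fsum_sq_le. intros i Hi. unfold cc.
      pose proof (Ld_nonneg i Hi).
      destruct (E (rowblk p rA rC r) i) eqn:HE.
      - destruct (Rlt_dec 0 (Ld i)).
        + split; [right; field; lra|]. split; auto. unfold Rdiv; apply Rmult_le_pos; [apply pow2_ge_0|apply Rlt_le, Rinv_0_lt_compat; auto].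
        + assert (Ld i = 0) by lra. split; [|lra]. rewrite H0, Rmult_0_l.
          pose proof (Ld_bound i v Hi). rewrite H0 in H1.
          assert (arow v r i ^ 2 <= fsum (p + q) (fun r => if E (rowblk p rA rC r) i then arow v r i ^ 2 else 0)).
          { replace (arow v r i ^ 2) with (if E (rowblk p rA rC r) i then arow v r i ^ 2 else 0) at 1 by (rewrite HE; auto).
            apply (fsum_term_le (p + q) (fun r0 => if E (rowblk p rA rC r0) i then arow v r0 i ^ 2 else 0)); auto.
            intros r0 Hr0; destruct (E (rowblk p rA rC r0) i); [apply pow2_ge_0|lra]. }
          lra.
      - rewrite arow_zero; auto. split; [simpl; lra|]. lra. }
    apply (Rmult_le_reg_l (Wd p M rA rC E Ld r)); auto. unfold Rdiv.
    replace (Wd p M rA rC E Ld r * (Gz n p A C v r ^ 2 * / Wd p M rA rC E Ld r)) with (Gz n p A C v r ^ 2) by (field; lra).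
    auto.
  - rewrite fsum_swap, <- SN_blocks. apply fsum_le; intros i Hi. unfold cc.
    pose proof (Ld_bound i v Hi). pose proof (Hsig i Hi). pose proof (normsq_nonneg i v).
    destruct (Rlt_dec 0 (Ld i)).
    + replace (fsum (p + q) (fun r => if E (rowblk p rA rC r) i then arow v r i ^ 2 / Ld i else 0)) with
        (/ Ld i * fsum (p + q) (fun r => if E (rowblk p rA rC r) i then arow v r i ^ 2 else 0)).
      * apply (Rmult_le_reg_l (Ld i)); auto. rewrite <- Rmult_assoc, Rinv_r, Rmult_1_l by lra. nra.
      * rewrite <- fsum_scal. apply fsum_ext; intros. destruct (E _ _); unfold Rdiv; ring.
    + rewrite (fsum_ext _ _ (fun _ => 0)); [rewrite fsum_zero; nra|]. intros; destruct (E _ _); auto.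
Qed.

Definition nW2 (x : nat -> R) := fsum (p + q) (fun r => Wd p M rA rC E Ld r * x r ^ 2).
Local Notation rs z := (resid n p A C b c z).

Lemma lagr_shift z l l' : Lg z l' = Lg z l + fsum (p + q) (fun r => rs z r * (l' r - l r)).
Proof. unfold lagr. assert (fsum (p + q) (fun r => l' r * rs z r) = fsum (p + q) (fun r => l r * rs z r) +
   fsum (p + q) (fun r => rs z r * (l' r - l r))) by (rewrite <- fsum_plus; apply fsum_ext; intros; ring). lra. Qed.

Lemma desc l l' z z' : argminL n p q M A C b c f l z ->
  Lg z l + fsum (p + q) (fun r => rs z r * (l' r - l r)) - 1/2 * nW2 (vsub l' l) <= Lg z' l'.
Proof.
  intros Hz. rewrite (lagr_shift z' l l'). pose proof (gap l z z' Hz).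
  pose proof (key_ineq (vsub z' z)).
  assert (fsum (p + q) (fun r => rs z' r * (l' r - l r)) = fsum (p + q) (fun r => rs z r * (l' r - l r)) +
      fsum (p + q) (fun r => (l' r - l r) * Gz n p A C (vsub z' z) r)).
  { rewrite <- fsum_plus. apply fsum_ext; intros r Hr.
    assert (rs z' r - rs z r = Gz n p A C (vsub z' z) r) by (rewrite resid_diff; unfold Gz, vsub; auto). nra. }
  assert (- (1/2 * nW2 (vsub l' l) + 1/2 * fsum (p + q) (fun r => Gz n p A C (vsub z' z) r ^ 2 / Wd p M rA rC E Ld r))
     <= fsum (p + q) (fun r => (l' r - l r) * Gz n p A C (vsub z' z) r)).
  { unfold nW2. rewrite <- !fsum_scal, <- fsum_plus.
    apply Rle_trans with (fsum (p + q) (fun r => - (1 / 2 * (Wd p M rA rC E Ld r * vsub l' l r ^ 2) +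
       1 / 2 * (Gz n p A C (vsub z' z) r ^ 2 / Wd p M rA rC E Ld r)))).
    - right. rewrite <- (Rmult_1_l (fsum _ (fun r => - _))). 
      replace (-(fsum (p + q) (fun r => 1 / 2 * (Wd p M rA rC E Ld r * vsub l' l r ^ 2) + 1 / 2 * (Gz n p A C (vsub z' z) r ^ 2 / Wd p M rA rC E Ld r))))
       with (-1 * (fsum (p + q) (fun r => 1 / 2 * (Wd p M rA rC E Ld r * vsub l' l r ^ 2) + 1 / 2 * (Gz n p A C (vsub z' z) r ^ 2 / Wd p M rA rC E Ld r)))) by ring.
      rewrite <- !fsum_scal. apply fsum_ext; intros; ring.
    - apply fsum_le; intros r Hr. pose proof (prod_lb (vsub l' l r) (Gz n p A C (vsub z' z) r) _ (HW r Hr)).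
      unfold vsub in *. lra. }
  lra.
Qed.

Local Notation Wr := (Wd p M rA rC E Ld).

Lemma projD_inD x : inD p q (projD p x).
Proof. intros r Hr. unfold projD. destruct (Nat.ltb_spec r p); [lia|]. apply Rmax_l. Qed.

Lemma projD_ineq x mu : inD p q mu ->
  fsum (p + q) (fun r => Wr r * (x r - projD p x r) * (mu r - projD p x r)) <= 0.
Proof.
  intros Hmu. apply Rle_trans with (fsum (p + q) (fun _ => 0)); [|rewrite fsum_zero; lra].
  apply fsum_le; intros r Hr. pose proof (HW r Hr). unfold projD. destruct (Nat.ltb_spec r p).
  - rewrite Rminus_diag. lra.
  - specialize (Hmu r ltac:(lia)). unfold Rmax. destruct (Rle_dec 0 (x r)).
    + rewrite Rminus_diag. lra.
    + rewrite !Rminus_0_r. assert (Hxm : x r * mu r <= 0) by nra.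
      replace (Wr r * x r * mu r) with (Wr r * (x r * mu r)) by ring.
      pose proof (Rmult_le_compat_l (Wr r) _ _ (Rlt_le _ _ H) Hxm). lra.
Qed.

Lemma projD_isW x : isWproj p q M rA rC E Ld (inD p q) x (projD p x).
Proof.
  split; [apply projD_inD|]. intros y' Hy'. unfold normW. apply sqrt_le_1_alt.
  apply fsum_le; intros r Hr. pose proof (HW r Hr). apply Rmult_le_compat_l; [lra|].
  unfold vsub, projD. destruct (Nat.ltb_spec r p).
  - rewrite Rminus_diag, pow_i by lia. apply pow2_ge_0.
  - specialize (Hy' r ltac:(lia)). unfold Rmax. destruct (Rle_dec 0 (x r)).
    + rewrite Rminus_diag, pow_i by lia. apply pow2_ge_0.
    + rewrite Rminus_0_r. assert (x r - y' r <= x r) by lra. assert (x r < 0) by lra.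
      assert (0 <= y' r * (y' r - 2 * x r)) by (apply Rmult_le_pos; lra).
      replace ((x r - y' r) ^ 2) with (x r ^ 2 + y' r * (y' r - 2 * x r)) by ring. lra.
Qed.

Variables (lam z : nat -> nat -> R).
Hypothesis Hl0 : inD p q (lam 0%nat).
Hypothesis Hz : forall k, argminL n p q M A C b c f (lam k) (z k).
Hypothesis Hlam : forall k, lam (S k) =
      projD p (vadd (lam k) (Winv p M rA rC E Ld (resid n p A C b c (z k)))).

Lemma inD_lam k : inD p q (lam k).
Proof. destruct k; auto. rewrite Hlam. apply projD_inD. Qed.

Lemma proj_k k mu : inD p q mu ->
  fsum (p + q) (fun r => (Wr r * (lam k r - lam (S k) r) + rs (z k) r) * (mu r - lam (S k) r)) <= 0.
Proof.
  intros Hmu. pose proof (projD_ineq (vadd (lam k) (Winv p M rA rC E Ld (resid n p A C b c (z k)))) mu Hmu).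
  rewrite <- Hlam in H. eapply Rle_trans; [right|apply H]. apply fsum_ext; intros r Hr.
  pose proof (HW r Hr). unfold vadd, Winv. field. lra.
Qed.

Definition dk k := Lg (z k) (lam k).
Definition Dk k := vsub (lam (S k)) (lam k).

Lemma step_a k : dk k + 1/2 * nW2 (Dk k) <= dk (S k).
Proof.
  pose proof (desc (lam k) (lam (S k)) (z k) (z (S k)) (Hz k)).
  pose proof (proj_k k (lam k) (inD_lam k)).
  assert (fsum (p + q) (fun r => (Wr r * (lam k r - lam (S k) r) + rs (z k) r) * (lam k r - lam (S k) r)) =
     nW2 (Dk k) - fsum (p + q) (fun r => rs (z k) r * (lam (S k) r - lam k r))).
  { unfold nW2, Dk. rewrite <- fsum_minus. apply fsum_ext; intros; unfold vsub; ring. }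
  unfold dk, Dk in *. lra.
Qed.

Lemma fsum_comb4 k F1 F2 F3 F4 : fsum k F1 - fsum k F2 + fsum k F3 - fsum k F4 =
  fsum k (fun i => F1 i - F2 i + F3 i - F4 i).
Proof. rewrite !fsum_minus, fsum_plus, fsum_minus. ring. Qed.

Lemma step_b k ls v : inD p q ls -> (forall z', v <= Lg z' ls) ->
  v - dk (S k) <= fsum (p + q) (fun r => Wr r * Dk k r * (ls r - lam k r)) - 1/2 * nW2 (Dk k).
Proof.
  intros Hls Hv. pose proof (Hv (z k)). rewrite (lagr_shift (z k) (lam k) ls) in H.
  pose proof (desc (lam k) (lam (S k)) (z k) (z (S k)) (Hz k)).
  pose proof (proj_k k ls Hls).
  assert (fsum (p + q) (fun r => rs (z k) r * (ls r - lam k r)) - fsum (p + q) (fun r => rs (z k) r * (lam (S k) r - lam k r))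
     + nW2 (Dk k) - fsum (p + q) (fun r => Wr r * Dk k r * (ls r - lam k r)) =
     fsum (p + q) (fun r => (Wr r * (lam k r - lam (S k) r) + rs (z k) r) * (ls r - lam (S k) r))).
  { unfold nW2. rewrite fsum_comb4. apply fsum_ext; intros; unfold Dk, vsub; ring. }
  change (vsub (lam (S k)) (lam k)) with (Dk k) in H0. unfold dk in *. lra.
Qed.

Lemma fejer_id k ls : fsum (p + q) (fun r => Wr r * Dk k r * (ls r - lam k r)) - 1/2 * nW2 (Dk k) =
  1/2 * (nW2 (vsub ls (lam k)) - nW2 (vsub ls (lam (S k)))).
Proof.
  unfold nW2. rewrite fsum_lin2, fsum_lin3. apply fsum_ext; intros; unfold Dk, vsub. field.
Qed.

Lemma step_c k ls kb : 0 <= kb -> nW2 (vsub ls (lam k)) <= kb ^ 2 * nW2 (Dk k) ->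
  fsum (p + q) (fun r => Wr r * Dk k r * (ls r - lam k r)) <= kb * nW2 (Dk k).
Proof.
  intros Hkb Hb. assert (HWn : forall r, (r < p + q)%nat -> 0 <= Wr r) by (intros; apply Rlt_le, HW; auto).
  pose proof (fsum_cs (p + q) Wr (Dk k) (fun r => ls r - lam k r) HWn).
  assert (H0 : 0 <= nW2 (Dk k)) by (apply fsum_nonneg; intros; apply Rmult_le_pos; [auto|apply pow2_ge_0]).
  apply le_of_sq_le; [nra|].
  fold (nW2 (Dk k)) in H. change (fsum (p + q) (fun i => Wr i * (ls i - lam k i) ^ 2)) with (nW2 (vsub ls (lam k))) in H.
  eapply Rle_trans; [apply H|]. replace ((kb * nW2 (Dk k)) ^ 2) with (nW2 (Dk k) * (kb ^ 2 * nW2 (Dk k))) by ring.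
  apply Rmult_le_compat_l; auto.
Qed.

Variables (ls0 : nat -> R) (v0 : R).
Hypothesis Hls0 : inD p q ls0.
Hypothesis Hdv0 : dval n p q M A C b c f ls0 v0.
Hypothesis Hmax0 : forall l w, inD p q l -> dval n p q M A C b c f l w -> w <= v0.
Local Notation LS := (inLstar n p q M A C b c f).

Lemma ls0_in : LS ls0.
Proof. split; auto. exists v0; split; auto. Qed.

Lemma Lstar_val ls : LS ls -> forall z', v0 <= Lg z' ls.
Proof.
  intros [HD [v [Hdv Hmx]]] z'. apply Rle_trans with v.
  - apply Hmx with ls0; auto.
  - apply Hdv.
Qed.

Lemma lagr_cont z0 (u : nat -> nat -> R) L : (forall r, (r < p + q)%nat -> Un_cv (fun j => u j r) (L r)) ->
  Un_cv (fun j => Lg z0 (u j)) (Lg z0 L).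
Proof.
  intros HL. unfold lagr. apply CV_plus; [apply cv_const|].
  apply fsum_cv. intros r Hr. apply CV_mult; auto. apply cv_const.
Qed.

Lemma Lstar_closed (u : nat -> nat -> R) L : (forall j, LS (u j)) ->
  (forall r, (r < p + q)%nat -> Un_cv (fun j => u j r) (L r)) -> LS L.
Proof.
  intros Hu HL. split.
  - intros r Hr. apply (cv_ge (fun j => u j r)); [apply HL; lia|]. intros j. destruct (Hu j) as [HD _]. apply HD; auto.
  - destruct (exists_argmin L) as [zL HzL]. exists (Lg zL L). split.
    + split; [exists zL; auto|]. intros z'; apply HzL.
    + intros l w Hl Hw. apply Rle_trans with v0; [apply Hmax0 with l; auto|].
      apply (cv_le2 (fun j => Lg zL (u j)) (fun _ => v0)); [apply lagr_cont; auto|apply cv_const|].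
      intros j. apply Lstar_val; auto.
Qed.

Lemma rs_A w r : (r < p)%nat -> rs w r = fsum n (fun col => A r col * w col) - b r.
Proof. intros Hr. unfold resid, Gz, Gm, gv. destruct (Nat.ltb_spec r p); [|lia]. auto. Qed.

Lemma rs_C w j : rs w (p + j)%nat = fsum n (fun col => C j col * w col) - c j.
Proof. unfold resid, Gz, Gm, gv. destruct (Nat.ltb_spec (p + j) p); [lia|]. replace (p + j - p)%nat with j by lia. auto. Qed.

Lemma lagr_split w l : Lg w l = fsep M f w + fsum p (fun r => l r * rs w r) +
   fsum q (fun j => l (p + j)%nat * (fsum n (fun col => C j col * w col) - c j)).
Proof. unfold lagr. rewrite fsum_split. rewrite (fsum_ext q _ (fun j => l (p + j)%nat * (fsum n (fun col => C j col * w col) - c j))); [ring|].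
  intros j Hj. rewrite rs_C. auto. Qed.

Lemma Lstar_bound : exists K : nat -> R, forall ls, LS ls -> forall r, (r < p + q)%nat -> Rabs (ls r) <= K r.
Proof.
  destruct Hslater as [zt [Hzt1 Hzt2]].
  set (sj := fun j => c j - fsum n (fun col => C j col * zt col)).
  assert (Hsj : forall j, (j < q)%nat -> 0 < sj j) by (intros j Hj; unfold sj; specialize (Hzt2 j Hj); lra).
  set (Kmu := fun j => (fsep M f zt - v0) / sj j).
  assert (Hmu : forall ls, LS ls -> forall j, (j < q)%nat -> 0 <= ls (p + j)%nat <= Kmu j).
  { intros ls Hls j Hj. pose proof (Lstar_val ls Hls zt) as H. rewrite lagr_split in H.
    assert (H1 : fsum p (fun r => ls r * rs zt r) = 0).
    { apply fsum_eq0; intros r Hr. rewrite rs_A, Hzt1 by auto. ring. }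
    assert (H2 : fsum q (fun j => ls (p + j)%nat * (fsum n (fun col => C j col * zt col) - c j)) =
                 - fsum q (fun j => ls (p + j)%nat * sj j)).
    { replace (- fsum q (fun j => ls (p + j)%nat * sj j)) with (-1 * fsum q (fun j => ls (p + j)%nat * sj j)) by ring.
      rewrite <- fsum_scal. apply fsum_ext; intros; unfold sj; ring. }
    destruct Hls as [HD _].
    assert (Hnn : forall j', (j' < q)%nat -> 0 <= ls (p + j')%nat * sj j').
    { intros j' Hj'. apply Rmult_le_pos; [apply HD; lia|apply Rlt_le, Hsj; auto]. }
    pose proof (fsum_term_le q (fun j => ls (p + j)%nat * sj j) j Hnn Hj). simpl in H0.
    pose proof (Hsj j Hj). pose proof (HD (p + j)%nat ltac:(lia)).
    split; auto. unfold Kmu. apply (Rmult_le_reg_r (sj j)); auto. unfold Rdiv.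
    rewrite Rmult_assoc, Rinv_l, Rmult_1_r by lra. lra. }
  assert (Hh : forall r, exists h : nat -> R, (r < p)%nat -> forall s, (s < p)%nat ->
                 fsum n (fun col => A s col * h col) = if Nat.eqb s r then 1 else 0).
  { intros r. destruct (Compare_dec.lt_dec r p) as [Hr|Hr].
    - destruct (SurjM.surjA p n A Hrank r Hr) as [h Hh]. exists h; auto.
    - exists (fun _ => 0); intros; lia. }
  set (hh := fun r => proj1_sig (constructive_indefinite_description _ (Hh r))).
  assert (Hhh : forall r, (r < p)%nat -> forall s, (s < p)%nat ->
                 fsum n (fun col => A s col * hh r col) = if Nat.eqb s r then 1 else 0).
  { intros r. unfold hh. destruct (constructive_indefinite_description _ _); auto. }
  set (zz := fun r (t : R) col => zt col - t * hh r col).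
  set (Knu := fun r => Rmax (fsep M f (zz r 1)) (fsep M f (zz r (-1))) - v0
               + fsum q (fun j => Kmu j * Rabs (fsum n (fun col => C j col * hh r col)))).
  exists (fun r => if Nat.ltb r p then Knu r else Kmu (r - p)%nat).
  intros ls Hls r Hr. destruct (Nat.ltb_spec r p) as [Hrp|Hrp].
  - assert (Ht : forall t, t = 1 \/ t = -1 -> t * ls r <= Knu r).
    { intros t Ht. pose proof (Lstar_val ls Hls (zz r t)) as H. rewrite lagr_split in H.
      assert (H1 : fsum p (fun s => ls s * rs (zz r t) s) = - t * ls r).
      { rewrite <- (fsum_delta p r ls Hrp). replace (- t * fsum p (fun s => ls s * (if Nat.eqb s r then 1 else 0))) with
          (fsum p (fun s => (- t) * (ls s * (if Nat.eqb s r then 1 else 0)))) by (rewrite fsum_scal; ring).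
        apply fsum_ext; intros s Hs. rewrite rs_A by auto.
        assert (fsum n (fun col => A s col * zz r t col) = b s - t * (if Nat.eqb s r then 1 else 0)).
        { rewrite <- (Hzt1 s Hs), <- (Hhh r Hrp s Hs), <- fsum_scal, <- fsum_minus. apply fsum_ext; intros; unfold zz; ring. }
        rewrite H0. ring. }
      assert (H2 : fsum q (fun j => ls (p + j)%nat * (fsum n (fun col => C j col * zz r t col) - c j)) <=
                   fsum q (fun j => Kmu j * Rabs (fsum n (fun col => C j col * hh r col)))).
      { apply fsum_le; intros j Hj. destruct (Hmu ls Hls j Hj) as [Hm1 Hm2].
        assert (fsum n (fun col => C j col * zz r t col) = fsum n (fun col => C j col * zt col) - t * fsum n (fun col => C j col * hh r col)).
        { rewrite <- fsum_scal, <- fsum_minus. apply fsum_ext; intros; unfold zz; ring. }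
        rewrite H0. specialize (Hzt2 j Hj).
        set (ch := fsum n (fun col => C j col * hh r col)) in *.
        assert (- t * ch <= Rabs ch) by (destruct Ht as [-> | ->]; [pose proof (Rabs_Ropp ch); pose proof (RRle_abs (- ch)); lra|pose proof (RRle_abs ch); lra]).
        assert (0 <= Rabs ch) by apply Rabs_pos.
        apply Rle_trans with (ls (p + j)%nat * Rabs ch); [apply Rmult_le_compat_l; lra|].
        apply Rmult_le_compat_r; auto. }
      assert (H3 : fsep M f (zz r t) <= Rmax (fsep M f (zz r 1)) (fsep M f (zz r (-1)))).
      { destruct Ht as [-> | ->]; [apply Rmax_l|apply Rmax_r]. }
      unfold Knu. lra. }
    destruct (Rcase_abs (ls r)).
    + rewrite Rabs_left by auto. specialize (Ht (-1) (or_intror eq_refl)). lra.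
    + rewrite Rabs_right by auto. specialize (Ht 1 (or_introl eq_refl)). lra.
  - destruct (Hmu ls Hls (r - p)%nat ltac:(lia)) as [Hm1 Hm2]. replace (p + (r - p))%nat with r in * by lia.
    rewrite Rabs_right by lra. auto.
Qed.

Lemma normW_cont (u : nat -> nat -> R) L (l : nat -> R) : (forall r, (r < p + q)%nat -> Un_cv (fun j => u j r) (L r)) ->
  Un_cv (fun j => normW p q M rA rC E Ld (vsub (u j) l)) (normW p q M rA rC E Ld (vsub L l)).
Proof.
  intros HL. unfold normW. apply continuity_seq.
  - apply continuity_pt_sqrt. apply fsum_nonneg; intros r Hr. apply Rmult_le_pos; [apply Rlt_le, HW; auto|apply pow2_ge_0].
  - apply fsum_cv. intros r Hr. apply CV_mult; [apply cv_const|]. apply cv_sq. unfold vsub. apply CV_minus; [apply HL; auto|apply cv_const].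
Qed.

Lemma normW_cont2 (u : nat -> nat -> R) L (l : nat -> R) : (forall r, (r < p + q)%nat -> Un_cv (fun j => u j r) (L r)) ->
  Un_cv (fun j => normW p q M rA rC E Ld (vsub l (u j))) (normW p q M rA rC E Ld (vsub l L)).
Proof.
  intros HL. unfold normW. apply continuity_seq.
  - apply continuity_pt_sqrt. apply fsum_nonneg; intros r Hr. apply Rmult_le_pos; [apply Rlt_le, HW; auto|apply pow2_ge_0].
  - apply fsum_cv. intros r Hr. apply CV_mult; [apply cv_const|]. apply cv_sq. unfold vsub. apply CV_minus; [apply cv_const|apply HL; auto].
Qed.

Lemma attain_T l : exists T, is_max (distLstar n p q M rA rC E A C b c Ld f l) T.
Proof.
  destruct Lstar_bound as [K HK].
  destruct (attain_max (p + q) LS (fun x => normW p q M rA rC E Ld (vsub x l)) K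
     (sqrt (fsum (p + q) (fun r => Wr r * (K r + Rabs (l r)) ^ 2)))) as [x [Hx Hmx]].
  - exists ls0; apply ls0_in.
  - auto.
  - apply Lstar_closed.
  - intros u L HL. apply normW_cont; auto.
  - intros x Hx. unfold normW. apply sqrt_le_1_alt. apply fsum_le; intros r Hr.
    apply Rmult_le_compat_l; [apply Rlt_le, HW; auto|]. apply pow_maj_Rabs. unfold vsub.
    pose proof (Rabs_triang (x r) (- l r)). rewrite Rabs_Ropp in H. specialize (HK x Hx r Hr).
    replace (x r - l r) with (x r + - l r) by ring. lra.
  - exists (normW p q M rA rC E Ld (vsub x l)). split.
    + exists x; auto.
    + intros w [ls [Hls ->]]. apply Hmx; auto.
Qed.

Lemma attain_proj l : exists pS, isWproj p q M rA rC E Ld LS l pS.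
Proof.
  destruct Lstar_bound as [K HK].
  destruct (attain_max (p + q) LS (fun x => - normW p q M rA rC E Ld (vsub l x)) K 0) as [x [Hx Hmx]].
  - exists ls0; apply ls0_in.
  - auto.
  - apply Lstar_closed.
  - intros u L HL. apply CV_opp. apply normW_cont2; auto.
  - intros x Hx. unfold normW. pose proof (sqrt_pos (fsum (p + q) (fun r => Wr r * vsub l x r ^ 2))). lra.
  - exists x. split; auto. intros y Hy. specialize (Hmx y Hy). lra.
Qed.

Lemma nW2_nonneg x : 0 <= nW2 x.
Proof. apply fsum_nonneg; intros r Hr. apply Rmult_le_pos; [apply Rlt_le, HW; auto|apply pow2_ge_0]. Qed.

Lemma nW2_sym x y : nW2 (vsub x y) = nW2 (vsub y x).
Proof. unfold nW2, vsub. apply fsum_ext; intros; ring. Qed.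

Lemma dval_k k : dval n p q M A C b c f (lam k) (dk k).
Proof. split; [exists (z k); auto|]. intros z'; apply Hz. Qed.

Lemma dk_le k : dk k <= v0.
Proof. apply Hmax0 with (lam k); [apply inD_lam|apply dval_k]. Qed.

Lemma fejer k ls : LS ls -> nW2 (vsub ls (lam (S k))) <= nW2 (vsub ls (lam k)).
Proof.
  intros Hls. pose proof (step_b k ls v0 (proj1 Hls) (Lstar_val ls Hls)). rewrite fejer_id in H.
  pose proof (dk_le (S k)). lra.
Qed.

Lemma fejer0 k ls : LS ls -> nW2 (vsub ls (lam k)) <= nW2 (vsub ls (lam 0)).
Proof. intros Hls. induction k; [lra|]. pose proof (fejer k ls Hls). lra. Qed.

Lemma e1_bound ls : LS ls -> v0 - dk 1 <= 1/2 * nW2 (vsub ls (lam 0)).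
Proof.
  intros Hls. pose proof (step_b 0 ls v0 (proj1 Hls) (Lstar_val ls Hls)). rewrite fejer_id in H.
  pose proof (nW2_nonneg (vsub ls (lam 1))). lra.
Qed.

Lemma resid_bound k : fsum (p + q) (fun r => projD p (rs (z k)) r ^ 2 / Wr r) <= nW2 (Dk k).
Proof.
  apply fsum_le; intros r Hr. pose proof (HW r Hr). unfold Dk, vsub. rewrite (Hlam k).
  unfold projD, vadd, Winv. destruct (Nat.ltb_spec r p).
  - right. field. lra.
  - pose proof (inD_lam k r ltac:(lia)). unfold Rmax. destruct (Rle_dec 0 (rs (z k) r)) as [Hp|Hp].
    + destruct (Rle_dec 0 (lam k r + rs (z k) r / Wr r)) as [Hq|Hq].
      * right. field. lra.
      * exfalso. apply Hq. apply Rplus_le_le_0_compat; auto. apply div_nonneg; lra.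
    + unfold Rdiv at 1. rewrite pow_i, Rmult_0_l by lia. apply Rmult_le_pos; [lra|apply pow2_ge_0].
Qed.

Variables (kbar : R).
Hypothesis Hkbar0 : 0 <= kbar.
Hypothesis Hkbar : forall l, inD p q l ->
      forall Tl T0, is_max (distLstar n p q M rA rC E A C b c Ld f l) Tl ->
      is_max (distLstar n p q M rA rC E A C b c Ld f (lam 0%nat)) T0 -> Tl <= T0 ->
      forall zl, argminL n p q M A C b c f l zl ->
      forall pD, isWproj p q M rA rC E Ld (inD p q)
                   (vadd l (Winv p M rA rC E Ld (resid n p A C b c zl))) pD ->
      forall pS, isWproj p q M rA rC E Ld (inLstar n p q M A C b c f) l pS ->
      normW p q M rA rC E Ld (vsub l pS) <= kbar * normW p q M rA rC E Ld (vsub pD l).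

Definition rho := 4 * (1 + kbar) / (1 + 4 * (1 + kbar)).

Lemma rho_pos : 0 < rho /\ rho <= 1.
Proof. unfold rho. split. apply Rdiv_lt_0_compat; lra. apply (Rmult_le_reg_r (1 + 4 * (1 + kbar))); [lra|].
  unfold Rdiv. rewrite Rmult_assoc, Rinv_l by lra. lra. Qed.

Lemma contract k : v0 - dk (S k) <= rho * (v0 - dk k).
Proof.
  destruct (attain_T (lam k)) as [Tl HTl]. destruct (attain_T (lam 0)) as [T0 HT0].
  destruct (attain_proj (lam k)) as [pS HpS].
  assert (Hle : Tl <= T0).
  { destruct HTl as [[ls [Hls ->]] _]. destruct HT0 as [_ HT0]. eapply Rle_trans; [|apply HT0; exists ls; split; eauto].
    unfold normW. apply sqrt_le_1_alt. apply fejer0; auto. }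
  assert (Hproj : isWproj p q M rA rC E Ld (inD p q) (vadd (lam k) (Winv p M rA rC E Ld (resid n p A C b c (z k)))) (lam (S k))).
  { rewrite (Hlam k). apply projD_isW. }
  pose proof (Hkbar (lam k) (inD_lam k) Tl T0 HTl HT0 Hle (z k) (Hz k) (lam (S k)) Hproj pS HpS) as HK.
  unfold normW in HK. change (fsum (p + q) (fun r => Wr r * vsub (lam k) pS r ^ 2)) with (nW2 (vsub (lam k) pS)) in HK.
  change (fsum (p + q) (fun r => Wr r * vsub (lam (S k)) (lam k) r ^ 2)) with (nW2 (Dk k)) in HK.
  assert (Hb : nW2 (vsub pS (lam k)) <= kbar ^ 2 * nW2 (Dk k)).
  { rewrite nW2_sym. pose proof (sqrt_pos (nW2 (vsub (lam k) pS))).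
    pose proof (sqrt_sqrt _ (nW2_nonneg (vsub (lam k) pS))). pose proof (sqrt_sqrt _ (nW2_nonneg (Dk k))).
    pose proof (sqrt_pos (nW2 (Dk k))). nra. }
  destruct HpS as [HpSL _].
  pose proof (step_b k pS v0 (proj1 HpSL) (Lstar_val pS HpSL)).
  pose proof (step_c k pS kbar Hkbar0 Hb). pose proof (step_a k). pose proof (dk_le (S k)).
  pose proof (nW2_nonneg (Dk k)).
  assert (Hr : (v0 - dk (S k)) * (1 + 4 * (1 + kbar)) <= 4 * (1 + kbar) * (v0 - dk k)) by nra.
  unfold rho. apply (Rmult_le_reg_r (1 + 4 * (1 + kbar))); [lra|].
  replace (4 * (1 + kbar) / (1 + 4 * (1 + kbar)) * (v0 - dk k) * (1 + 4 * (1 + kbar))) with (4 * (1 + kbar) * (v0 - dk k)) by fld.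
  lra.
Qed.

Lemma e_bound k : (1 <= k)%nat -> v0 - dk k <= rho ^ (k - 1) * (v0 - dk 1).
Proof.
  induction k; intros Hk; [lia|]. destruct k.
  - simpl. lra.
  - specialize (IHk ltac:(lia)). pose proof (contract (S k)). destruct rho_pos as [Hr1 Hr2].
    replace (S (S k) - 1)%nat with (S k) by lia. replace (S k - 1)%nat with k in IHk by lia. rewrite <- tech_pow_Rmult. apply Rle_trans with (rho * (v0 - dk (S k))); [auto|]. rewrite Rmult_assoc. apply Rmult_le_compat_l; lra.
Qed.

Lemma final R0 : is_min (distLstar n p q M rA rC E A C b c Ld f (lam 0%nat)) R0 ->
  forall k, (1 <= k)%nat ->
    normWinv p q M rA rC E Ld (projD p (resid n p A C b c (z k)))
    <= Rpower (4 * (1 + kbar) / (1 + 4 * (1 + kbar))) ((INR k - 2) / 2) * R0.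
Proof.
  intros [[ls1 [Hls1 HR0]] _] k Hk. fold rho.
  pose proof rho_pos as [Hr1 Hr2].
  assert (HR0sq : R0 ^ 2 = nW2 (vsub ls1 (lam 0))).
  { rewrite HR0. unfold normW. simpl. rewrite Rmult_1_r. apply sqrt_sqrt. apply nW2_nonneg. }
  assert (HR0p : 0 <= R0) by (rewrite HR0; apply sqrt_pos).
  pose proof (e_bound k Hk). pose proof (e1_bound ls1 Hls1). pose proof (step_a k). pose proof (dk_le (S k)).
  pose proof (resid_bound k).
  assert (Hpk : 0 <= rho ^ (k - 1)) by (apply pow_le; lra).
  assert (HN : fsum (p + q) (fun r => projD p (rs (z k)) r ^ 2 / Wr r) <= rho ^ (k - 1) * R0 ^ 2) by nra.
  set (X := Rpower rho ((INR k - 2) / 2)).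
  assert (HX : 0 < X) by (unfold X, Rpower; apply exp_pos).
  assert (HX2 : rho ^ (k - 1) <= X ^ 2).
  { assert (X ^ 2 * rho = rho ^ (k - 1)).
    { replace (X ^ 2 * rho) with (X * X * rho) by ring. unfold X. rewrite <- Rpower_plus.
      rewrite <- (Rpower_1 rho) at 2 by lra.
      rewrite <- Rpower_plus, <- Rpower_pow by lra. f_equal. rewrite minus_INR by lia. simpl. field. }
    nra. }
  apply le_of_sq_le; [nra|]. unfold normWinv.
  rewrite pow2_sqrt by (apply fsum_nonneg; intros r Hr; pose proof (HW r Hr); apply div_nonneg; [apply pow2_ge_0|lra]).
  replace ((X * R0) ^ 2) with (X ^ 2 * R0 ^ 2) by ring.
  apply Rle_trans with (rho ^ (k - 1) * R0 ^ 2); auto. apply Rmult_le_compat_r; [apply pow2_ge_0|auto].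
Qed.


End Main.

Theorem theorem3
  (n p q M Mbar : nat) (blk rA rC : nat -> nat) (E : nat -> nat -> bool)
  (A C : nat -> nat -> R) (b c : nat -> R)
  (f : nat -> (nat -> R) -> R) (gf : nat -> (nat -> R) -> (nat -> R))
  (sigma Lf Ld : nat -> R)
  (* block structure *)
  (Hblk : forall col, (col < n)%nat -> (blk col < M)%nat)
  (HrA : forall r, (r < p)%nat -> (rA r < Mbar)%nat)
  (HrC : forall r, (r < q)%nat -> (rC r < Mbar)%nat)
  (HEA : forall r col, (r < p)%nat -> (col < n)%nat ->
           E (rA r) (blk col) = false -> A r col = 0)
  (HEC : forall r col, (r < q)%nat -> (col < n)%nat ->
           E (rC r) (blk col) = false -> C r col = 0)
  (* f_i is a function of z_i only *)
  (Hloc : forall i x y, (i < M)%nat -> sameblk n blk i x y -> f i x = f i y)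
  (* Assumption 1(a): sigma_i-strong convexity and L_i-Lipschitz gradient *)
  (Hsig : forall i, (i < M)%nat -> 0 < sigma i)
  (Hsc : forall i x y t, (i < M)%nat -> 0 <= t <= 1 ->
      f i (vadd (vscal t x) (vscal (1 - t) y))
      <= t * f i x + (1 - t) * f i y
         - sigma i / 2 * t * (1 - t) * normsq_blk n blk i (vsub x y))
  (Hgrad : forall i x d, (i < M)%nat ->
      derivable_pt_lim (fun t => f i (vadd x (vscal t d))) 0
        (fsum n (fun col => if Nat.eqb (blk col) i then gf i x col * d col else 0)))
  (Hlip : forall i x y, (i < M)%nat ->
      sqrt (normsq_blk n blk i (vsub (gf i x) (gf i y)))
      <= Lf i * sqrt (normsq_blk n blk i (vsub x y)))
  (* Assumption 1(b): A full row rank, Slater point *)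
  (Hrank : forall nu : nat -> R,
      (forall col, (col < n)%nat -> fsum p (fun r => nu r * A r col) = 0) ->
      forall r, (r < p)%nat -> nu r = 0)
  (Hslater : exists zt : nat -> R,
      (forall r, (r < p)%nat -> fsum n (fun col => A r col * zt col) = b r) /\
      (forall r, (r < q)%nat -> fsum n (fun col => C r col * zt col) < c r))
  (* L_{d_i} = ||[A_ji; C_ji]_{j in Nbar_i}||^2 / sigma_i *)
  (HLd : forall i, (i < M)%nat -> is_lub (opnorm_set n p q blk rA rC E A C i) (Ld i * sigma i))
  (* W positive definite *)
  (HW : forall r, (r < p + q)%nat -> 0 < Wd p M rA rC E Ld r)
  (* Algorithm (DG) *)
  (lam z : nat -> nat -> R)
  (Hl0 : inD p q (lam 0%nat))
  (Hz : forall k, argminL n p q M A C b c f (lam k) (z k))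
  (Hlam : forall k, lam (S k) =
      projD p (vadd (lam k) (Winv p M rA rC E Ld (resid n p A C b c (z k)))))
  (* error bound constant kbar *)
  (kbar : R) (Hkbar0 : 0 <= kbar)
  (Hkbar : forall l, inD p q l ->
      forall Tl T0, is_max (distLstar n p q M rA rC E A C b c Ld f l) Tl ->
      is_max (distLstar n p q M rA rC E A C b c Ld f (lam 0%nat)) T0 -> Tl <= T0 ->
      forall zl, argminL n p q M A C b c f l zl ->
      forall pD, isWproj p q M rA rC E Ld (inD p q)
                   (vadd l (Winv p M rA rC E Ld (resid n p A C b c zl))) pD ->
      forall pS, isWproj p q M rA rC E Ld (inLstar n p q M A C b c f) l pS ->
      normW p q M rA rC E Ld (vsub l pS) <= kbar * normW p q M rA rC E Ld (vsub pD l)) :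
  forall R0, is_min (distLstar n p q M rA rC E A C b c Ld f (lam 0%nat)) R0 ->
  forall k, (1 <= k)%nat ->
    normWinv p q M rA rC E Ld (projD p (resid n p A C b c (z k)))
    <= Rpower (4 * (1 + kbar) / (1 + 4 * (1 + kbar))) ((INR k - 2) / 2) * R0.
Proof.
  intros R0 HR0 k Hk.
  pose proof HR0 as HR0'.
  destruct HR0' as [[ls1 [[HD [v [Hdv Hmx]]] _]] _].
  exact (final n p q M blk rA rC E A C b c f gf sigma Lf Ld Hblk HEA HEC Hsig Hsc Hgrad Hrank Hslater HLd HW
    lam z Hl0 Hz Hlam ls1 v HD Hdv Hmx kbar Hkbar0 Hkbar R0 HR0 k Hk).
Qed.
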